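(* Let $\mathcal{X}$ be a nonempty closed domain set whose closed convex hull $\operatorname{clconv}(\mathcal{X})$ contains no line, and let $0\le\tilde m\le m$ be integers. Suppose that for every face $F$ of $\operatorname{clconv}(\mathcal{X})$ of dimension at most $\tilde m$ and every face $\widehat F$ of the recession cone $\operatorname{rec}(\operatorname{clconv}(\mathcal{X}))$ of dimension at most $\tilde m+1$, the Minkowski sum satisfies $F+\widehat F\subseteq\mathcal{X}$. Then for every choice of $m$ LMIs of dimension $\tilde m$, $\mathcal{C}_{\mathrm{rel}}=\operatorname{clconv}(\mathcal{C})$.
   Context: Let $\mathcal{Q}$ be one of $\mathbb{S}^n_+$, $\mathbb{S}^n$ or $\mathbb{R}^{n\times p}$, where $k\le n\le p$ are positive integers, with trace inner product $\langle A,X\rangle=\operatorname{tr}(A^\top X)$. A domain set is a set $\mathcal{X}=\{X\in\mathcal{Q}:\operatorname{rank}(X)\le k,\ F_j(X)\le0\ \forall j\in[t]\}$ with each $F_j:\mathcal{Q}\to\mathbb{R}$ continuous. $\operatorname{clconv}$ is closed convex hull. A system of $m$ LMIs consists of matrices $A_1,\dots,A_m$ (same size as elements of $\mathcal{Q}$, possibly non-symmetric) and bounds $-\infty\le b_i^l\le b_i^u\le+\infty$; its dimension is $\dim\operatorname{span}\{A_1,\dots,A_m\}$. Set $\mathcal{C}=\{X\in\mathcal{X}: b_i^l\le\langle A_i,X\rangle\le b_i^u\ \forall i\}$ and $\mathcal{C}_{\mathrm{rel}}=\{X\in\operatorname{clconv}(\mathcal{X}): b_i^l\le\langle A_i,X\rangle\le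 b_i^u\ \forall i\}$. A face of a closed convex set $D$ is a convex $F\subseteq D$ such that any segment $[a,b]\subseteq D$ whose open part meets $F$ lies in $F$; its dimension is that of its affine hull. The recession cone of a closed convex set $D$ is $\operatorname{rec}(D)=\{d: x+td\in D\ \forall x\in D,\ t\ge0\}$. *)

(* Defs.v *)
From HB Require Import structures.
From mathcomp Require Import all_boot all_order all_algebra.
From mathcomp Require Import all_classical all_reals all_analysis.
Set Implicit Arguments. Unset Strict Implicit. Unset Printing Implicit Defensive.
Import Order.TTheory GRing.Theory Num.Theory numFieldNormedType.Exports.
Local Open Scope classical_set_scope.
Local Open Scope ring_scope.

Section Defs.
Variables (R : realType) (n p : nat).
Notation M := 'M[R]_(n, p).

Inductive Qkind := QPSD | QSym | QFull.

Definition symmx (X : M) : Prop :=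
  exists e : p = n, (castmx (erefl n, e) X)^T = castmx (erefl n, e) X.

Definition psdmx (X : M) : Prop :=
  exists e : p = n, (castmx (erefl n, e) X)^T = castmx (erefl n, e) X /\
    forall v : 'rV[R]_n, 0 <= (v *m castmx (erefl n, e) X *m v^T) 0 0.

Definition Qset (q : Qkind) : set M :=
  match q with
  | QPSD => [set X | psdmx X]
  | QSym => [set X | symmx X]
  | QFull => setT
  end.

Definition mxinner (A X : M) : R := \tr (A^T *m X).

Definition domain_set (q : Qkind) (k t : nat) (F : 'I_t -> M -> R) : set M :=
  [set X | Qset q X /\ (\rank X <= k)%N /\ forall j, F j X <= 0].

Definition conv_hull (S : set M) : set M :=
  [set z | exists (N : nat) (w : 'I_N -> R) (x : 'I_N -> M),
     (forall i, 0 <= w i) /\ \sum_(i < N) w i = 1 /\ (forall i, S (x i)) /\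
     z = \sum_(i < N) w i *: x i].

Definition clconv (S : set M) : set M := closure (conv_hull S).

Definition is_convex (S : set M) : Prop :=
  forall x y (l : R), S x -> S y -> 0 <= l <= 1 -> S ((1 - l) *: x + l *: y).

Definition segment (a b : M) : set M :=
  [set z | exists l : R, 0 <= l <= 1 /\ z = (1 - l) *: a + l *: b].
Definition open_segment (a b : M) : set M :=
  [set z | exists l : R, 0 < l < 1 /\ z = (1 - l) *: a + l *: b].

Definition face (D F : set M) : Prop :=
  is_convex F /\ F `<=` D /\
  forall a b, segment a b `<=` D -> open_segment a b `&` F !=set0 ->
    segment a b `<=` F.

(* dimension of the affine hull of F is at most d (the empty set has
   dimension -1): the direction space (span of F - F) has dim <= d *)
Definition affdim_le (F : set M) (d : nat) : Prop :=
  F = set0 \/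
  exists V : {vspace M}, (\dim V <= d)%N /\
    forall x y, F x -> F y -> x - y \in V.

Definition rec_cone (D : set M) : set M :=
  [set d | forall x (t : R), D x -> 0 <= t -> D (x + t *: d)].

Definition no_line (D : set M) : Prop :=
  ~ exists x d : M, d != 0 /\ forall t : R, D (x + t *: d).

Definition mink_sum (A B : set M) : set M :=
  [set z | exists x y, A x /\ B y /\ z = x + y].

Definition lmi_dim (m : nat) (A : 'I_m -> M) : nat :=
  \dim <<[seq A i | i <- enum 'I_m]>>%VS.

Definition lmi_cut (S : set M) (m : nat) (A : 'I_m -> M)
    (bl bu : 'I_m -> \bar R) : set M :=
  [set X | S X /\ forall i, (bl i <= (mxinner (A i) X)%:E <= bu i)%E].

End Defs.

(* Main.v *)
Require Import Defs.
From HB Require Import structures.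
From mathcomp Require Import all_boot all_order all_algebra.
From mathcomp Require Import all_classical all_reals all_analysis.
From mathcomp Require Import ring lra zify.
Set Implicit Arguments. Unset Strict Implicit. Unset Printing Implicit Defensive.
Import Order.TTheory GRing.Theory Num.Theory numFieldNormedType.Exports.
Local Open Scope classical_set_scope.
Local Open Scope ring_scope.


Section Generic.
Variables (R : realType) (n p : nat).
Local Notation M := 'M[R]_(n, p).
Implicit Types (D : set M).

Ltac mxring := apply/matrixP => ? ?; rewrite !mxE; ring.

Definition dirs D (x : M) : set M :=
  [set f | exists e : R, 0 < e /\ D (x + e *: f) /\ D (x - e *: f)].
Definition minface D (x : M) : set M :=
  [set y | D y /\ exists e : R, 0 < e /\ D (x + e *: (x - y))].

Lemma seg_in D x f e t : is_convex D -> D x -> D (x + e *: f) -> 0 < e ->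
  0 <= t <= e -> D (x + t *: f).
Proof.
move=> cD Dx Df e0 /andP[t0 te].
have := cD _ _ (t / e) Dx Df.
have -> : (1 - t / e) *: x + (t / e) *: (x + e *: f) = x + t *: f.
  apply/matrixP => i j; rewrite !mxE; field; lra.
apply; apply/andP; split; first by rewrite divr_ge0 // ltW.
by rewrite ler_pdivrMr // mul1r.
Qed.

Lemma conv3 D x w b (a c : R) : is_convex D -> D x -> D w -> D b ->
  0 <= a -> 0 <= c -> a + c <= 1 -> D (x + a *: (w - x) + c *: (b - x)).
Proof.
move=> cD Dx Dw Db a0 c0 ac1.
have [s0|s0] := eqVneq (a + c) 0.
  have a00 : a = 0 by lra.
  have c00 : c = 0 by lra.
  by rewrite a00 c00 !scale0r !addr0.
have sp : 0 < a + c by rewrite lt_def s0 /=; lra.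
have Dy := cD _ _ (c / (a + c)) Dw Db.
have Dy' : D ((1 - c / (a + c)) *: w + c / (a + c) *: b).
  apply: Dy; apply/andP; split; first by rewrite divr_ge0 //; lra.
  by rewrite ler_pdivrMr // mul1r; lra.
have := cD _ _ (a + c) Dx Dy'.
have -> : (1 - (a + c)) *: x + (a + c) *: ((1 - c / (a + c)) *: w + c / (a + c) *: b)
   = x + a *: (w - x) + c *: (b - x).
  apply/matrixP => i j; rewrite !mxE; field; lra.
apply; apply/andP; split; lra.
Qed.

Lemma dirs0 D x : D x -> dirs D x 0.
Proof. by move=> Dx; exists 1; rewrite scaler0 addr0 subr0. Qed.

Lemma dirsN D x f : dirs D x f -> dirs D x (- f).
Proof. by case=> e [e0 [h1 h2]]; exists e; rewrite scalerN opprK; split. Qed.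

Lemma dirsZ D x f c : D x -> dirs D x f -> dirs D x (c *: f).
Proof.
move=> Dx [e [e0 [h1 h2]]].
have [c0|c0] := eqVneq c 0; first by rewrite c0 scale0r; exact: dirs0.
have cp : 0 < `|c| by rewrite normr_gt0.
exists (e / `|c|); split; first by rewrite divr_gt0.
case: (ltrP 0 c) => cs.
  rewrite scalerA (gtr0_norm cs) divfK //; split => //.
rewrite scalerA (ler0_norm cs).
have -> : e / - c * c = - e by field.
by rewrite scaleNr opprK; split.
Qed.

Lemma dirsD D x f g : is_convex D -> D x -> dirs D x f -> dirs D x g ->
  dirs D x (f + g).
Proof.
move=> cD Dx [e1 [e1p [h1 h1']]] [e2 [e2p [h2 h2']]].
pose e := Order.min e1 e2.
have ep : 0 < e by rewrite lt_min e1p e2p.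
have ee1 : e <= e1 by rewrite ge_min lexx.
have ee2 : e <= e2 by rewrite ge_min lexx orbT.
have a1 : D (x + e *: f) by apply: (seg_in cD Dx h1) => //; rewrite (ltW ep).
have a2 : D (x + e *: g) by apply: (seg_in cD Dx h2) => //; rewrite (ltW ep).
have b1 : D (x + e *: - f).
  by apply: (@seg_in _ _ _ e1) => //; [rewrite scalerN|rewrite (ltW ep)].
have b2 : D (x + e *: - g).
  by apply: (@seg_in _ _ _ e2) => //; [rewrite scalerN|rewrite (ltW ep)].
have half : 0 <= (2^-1 : R) <= 1 by apply/andP; split; lra.
exists (e / 2); split; first by rewrite divr_gt0.
split.
  have := cD _ _ _ a1 a2 half.
  by have -> : (1 - 2^-1) *: (x + e *: f) + 2^-1 *: (x + e *: g) = x + e / 2 *: (f + g)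
    by apply/matrixP => i j; rewrite !mxE; field.
have := cD _ _ _ b1 b2 half.
by have -> : (1 - 2^-1) *: (x + e *: - f) + 2^-1 *: (x + e *: - g) = x - e / 2 *: (f + g)
  by apply/matrixP => i j; rewrite !mxE; field.
Qed.


Lemma minface_self D x : D x -> minface D x x.
Proof. by move=> Dx; split=> //; exists 1; rewrite subrr scaler0 addr0. Qed.

Lemma minface_dirs D x y : is_convex D -> D x -> minface D x y -> dirs D x (y - x).
Proof.
move=> cD Dx [Dy [e [e0 De]]].
pose d := Order.min 1 e.
have d0 : 0 < d by rewrite lt_min e0 ltr01.
have d1 : d <= 1 by rewrite ge_min lexx.
have de : d <= e by rewrite ge_min lexx orbT.
exists d; split => //; split.
  apply: (@seg_in _ _ _ 1) => //; first by rewrite scale1r addrC subrK.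
  by rewrite (ltW d0).
have -> : x - d *: (y - x) = x + d *: (x - y) by mxring.
by apply: (@seg_in _ _ _ e) => //; rewrite (ltW d0).
Qed.

Lemma minface_side D x a b z l : is_convex D -> D x -> D a -> D b ->
  minface D x z -> z = (1 - l) *: a + l *: b -> 0 < l < 1 -> minface D x a.
Proof.
move=> cD Dx Da Db [Dz [e [e0 Dw]]] zE /andP[l0 l1].
split => //.
exists ((1 - l) * e / (1 + e)); split.
  by rewrite divr_gt0 ?mulr_gt0 //; lra.
have := conv3 (a := (1 + e)^-1) (c := l * e / (1 + e)) cD Dx Dw Db.
have -> : x + (1 + e)^-1 *: (x + e *: (x - z) - x) + l * e / (1 + e) *: (b - x)
  = x + (1 - l) * e / (1 + e) *: (x - a).
  rewrite zE; apply/matrixP => i j; rewrite !mxE; field; lra.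
apply.
- by rewrite invr_ge0; lra.
- by rewrite divr_ge0 ?mulr_ge0 //; lra.
- have -> : (1 + e)^-1 + l * e / (1 + e) = (1 + l * e) / (1 + e) by field; lra.
  by rewrite ler_pdivrMr ?mul1r; [nra|lra].
Qed.

Lemma minface_convex D x : is_convex D -> D x -> is_convex (minface D x).
Proof.
move=> cD Dx y1 y2 l [D1 [e1 [e1p h1]]] [D2 [e2 [e2p h2]]] l01.
split; first exact: cD.
pose e := Order.min e1 e2.
have ep : 0 < e by rewrite lt_min e1p e2p.
have ee1 : e <= e1 by rewrite ge_min lexx.
have ee2 : e <= e2 by rewrite ge_min lexx orbT.
have a1 : D (x + e *: (x - y1)) by apply: (seg_in cD Dx h1) => //; rewrite (ltW ep).
have a2 : D (x + e *: (x - y2)) by apply: (seg_in cD Dx h2) => //; rewrite (ltW ep).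
exists e; split => //.
have := cD _ _ _ a1 a2 l01.
have -> : (1 - l) *: (x + e *: (x - y1)) + l *: (x + e *: (x - y2)) =
  x + e *: (x - ((1 - l) *: y1 + l *: y2)) by mxring.
by [].
Qed.

Lemma minface_face D x : is_convex D -> D x -> face D (minface D x).
Proof.
move=> cD Dx; split; first exact: minface_convex.
split; first by move=> y [].
move=> a b sab [z [[l [/andP[l0 l1] zE]] Fz]].
have Da : D a by apply: sab; exists 0; rewrite subr0 scale1r scale0r addr0 lexx ler01.
have Db : D b by apply: sab; exists 1; rewrite subrr scale0r scale1r add0r lexx ler01.
have Fa : minface D x a by apply: (minface_side cD Dx Da Db Fz zE); rewrite l0 l1.
have Fb : minface D x b.
  apply: (minface_side (l := 1 - l) cD Dx Db Da Fz).
    by rewrite zE; mxring.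
  by apply/andP; split; lra.
move=> y [l' [l'01 ->]].
exact: minface_convex.
Qed.

Lemma subspace_rep (P : set M) : P 0 -> (forall f g, P f -> P g -> P (f + g)) ->
  (forall c f, P f -> P (c *: f)) ->
  exists U : {vspace M}, forall v, v \in U <-> P v.
Proof.
move=> P0 PD PZ.
pose Q (d : nat) := exists U : {vspace M}, (forall v, v \in U -> P v) /\ \dim U = d.
have Q0 : exists d, `[< Q d >].
  exists 0%N; apply/asboolP; exists 0%VS; split; last exact: dimv0.
  by move=> v; rewrite memv0 => /eqP ->.
have Qb : forall d, `[< Q d >] -> (d <= \dim {: M})%N.
  by move=> d /asboolP [U [_ <-]]; apply: dimvS; exact: subvf.
case: (ex_maxnP Q0 Qb) => d /asboolP [U [UP Ud]] dmax.
exists U => v; split; first exact: UP.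
move=> Pv; apply: contrapT => vU.
have sub : (U <= U + <[v]>)%VS by apply: addvSl.
have nsub : ~~ (U + <[v]> <= U)%VS.
  apply/negP => /subvP h; apply: vU; apply: h.
  by have := memv_add (mem0v U) (memv_line v); rewrite add0r.
have : (\dim U < \dim (U + <[v]>))%N by rewrite (ltn_leqif (dimv_leqif_sup sub)).
have : (\dim (U + <[v]>) <= d)%N.
  apply: dmax; apply/asboolP; exists (U + <[v]>)%VS; split => //.
  move=> w /memv_addP [u uU [w' /vlineP [k ->] ->]].
  by apply: PD; [exact: UP| exact: PZ].
rewrite Ud; lia.
Qed.


Lemma conv_hull_sub (S D : set M) : is_convex D -> S `<=` D -> conv_hull S `<=` D.
Proof.
move=> cD SD z [N [w [x [w0 [w1 [Sx ->]]]]]].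
elim: N w x w0 w1 Sx => [|N IH] w x w0 w1 Sx.
  by move: w1; rewrite big_ord0 => /eqP; rewrite eq_sym oner_eq0.
rewrite big_ord_recr /=; rewrite big_ord_recr /= in w1.
set s := \sum_(i < N) w (widen_ord (leqnSn N) i) in w1 *.
have s0 : 0 <= s by apply: sumr_ge0 => i _.
have [sz|snz] := eqVneq s 0.
  have wz := psumr_eq0P (fun i _ => w0 (widen_ord (leqnSn N) i)) sz.
  rewrite big1 ?add0r; last by move=> i _; rewrite wz // scale0r.
  have -> : w ord_max = 1 by rewrite -w1 sz add0r.
  by rewrite scale1r; apply: SD.
have sp : 0 < s by rewrite lt_def snz s0.
pose w' := fun i : 'I_N => w (widen_ord (leqnSn N) i) / s.
have Dy : D (\sum_(i < N) w' i *: x (widen_ord (leqnSn N) i)).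
  apply: IH => //; first by move=> i; rewrite divr_ge0.
  by rewrite -mulr_suml divff.
have := cD _ _ (w ord_max) Dy (SD _ (Sx ord_max)).
have -> : 1 - w ord_max = s by rewrite -w1 addrK.
have -> : s *: (\sum_(i < N) w' i *: x (widen_ord (leqnSn N) i)) =
  \sum_(i < N) w (widen_ord (leqnSn N) i) *: x (widen_ord (leqnSn N) i).
  rewrite scaler_sumr; apply: eq_bigr => i _; rewrite scalerA /w'.
  by rewrite mulrC divfK.
apply; rewrite w0 /= -w1 lerDr //.
Qed.

Lemma conv_hull_self (S : set M) : S `<=` conv_hull S.
Proof.
move=> z Sz; exists 1%N, (fun _ => 1), (fun _ => z).
by rewrite !big_ord1 scale1r; split=> //; split.
Qed.

Lemma conv_hullS (S T : set M) : S `<=` T -> conv_hull S `<=` conv_hull T.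
Proof.
move=> ST z [N [w [x [h1 [h2 [h3 h4]]]]]].
by exists N, w, x; split=> //; split=> //; split=> // i; apply: ST.
Qed.

Lemma conv_hull_convex (S : set M) : is_convex (conv_hull S).
Proof.
move=> y z l [N1 [w1 [x1 [w10 [w11 [S1 ->]]]]]] [N2 [w2 [x2 [w20 [w21 [S2 ->]]]]]].
move=> /andP[l0 l1].
have sl : forall i, fintype.split (lshift N2 i) = inl i := fun i => unsplitK (inl _ i).
have sr : forall j, fintype.split (rshift N1 j) = inr j := fun j => unsplitK (inr _ j).
exists (N1 + N2)%N,
  (fun k => match fintype.split k with inl i => (1 - l) * w1 i | inr j => l * w2 j end),
  (fun k => match fintype.split k with inl i => x1 i | inr j => x2 j end).
split.
  by move=> k; case: (fintype.split k) => i; apply: mulr_ge0 => //; lra.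
split.
  rewrite big_split_ord /=.
  under eq_bigr do rewrite sl.
  under [X in _ + X]eq_bigr do rewrite sr.
  by rewrite -!mulr_sumr w11 w21 !mulr1 subrK.
split; first by move=> k; case: (fintype.split k) => i; [apply: S1|apply: S2].
apply/esym; rewrite big_split_ord /= !scaler_sumr.
by congr (_ + _); apply: eq_bigr => i _; rewrite ?sl ?sr scalerA.
Qed.

Lemma closure_convex D : is_convex D -> is_convex (closure D).
Proof.
move=> cD a b l ca cb /andP[l0 l1] B /nbhs_ballP [e e0 sB].
have e20 : 0 < e / 2 by rewrite divr_gt0.
have [a' [Da' ba]] := ca _ (nbhsx_ballx a (e / 2) e20).
have [b' [Db' bb]] := cb _ (nbhsx_ballx b (e / 2) e20).
exists ((1 - l) *: a' + l *: b'); split; first by apply: cD => //; rewrite l0 l1.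
apply: sB; move: ba bb; rewrite -!ball_normE /= => ba bb.
have -> : (1 - l) *: a + l *: b - ((1 - l) *: a' + l *: b') =
  (1 - l) *: (a - a') + l *: (b - b') by mxring.
apply: (le_lt_trans (ler_normD _ _)); rewrite !normrZ.
rewrite (ger0_norm l0) ger0_norm; last lra.
have h1 : (1 - l) * `|a - a'| <= (1 - l) * (e / 2) by apply: ler_wpM2l; [lra|exact: ltW].
have h2 : l * `|b - b'| <= l * (e / 2) by apply: ler_wpM2l => //; exact: ltW.
lra.
Qed.


Lemma rec0 D : rec_cone D 0.
Proof. by move=> x t Dx _; rewrite scaler0 addr0. Qed.

Lemma rec_scale D d c : rec_cone D d -> 0 <= c -> rec_cone D (c *: d).
Proof. by move=> rd c0 x t Dx t0; rewrite scalerA; apply: rd => //; rewrite mulr_ge0. Qed.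

Lemma rec_add D d1 d2 : rec_cone D d1 -> rec_cone D d2 -> rec_cone D (d1 + d2).
Proof.
move=> r1 r2 x t Dx t0; rewrite scalerDr addrA.
by apply: r2 => //; apply: r1.
Qed.

Lemma rec_convex D : is_convex D -> is_convex (rec_cone D).
Proof.
move=> cD a b l ra rb l01 x t Dx t0.
have := cD _ _ l (ra x t Dx t0) (rb x t Dx t0) l01.
suff -> : (1 - l) *: (x + t *: a) + l *: (x + t *: b) = x + t *: ((1 - l) *: a + l *: b) by [].
mxring.
Qed.

Lemma cont_affine (x d : M) : continuous (fun t : R => x + t *: d).
Proof.
move=> t.
have h1 : {for t, continuous (fun s : R => s *: d)}.
  by apply: continuousZr_tmp; apply: cvg_id.
have h0 : {for t, continuous (fun=> x)} by apply: cst_continuous.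
have h := continuousD h0 h1.
exact: h.
Qed.

Lemma cont_affine2 (x : M) (t : R) : continuous (fun d : M => x + t *: d).
Proof.
move=> d.
have h1 : {for d, continuous (fun s : M => t *: s)}.
  by apply: continuousZl_tmp; apply: cvg_id.
have h0 : {for d, continuous (fun=> x)} by apply: cst_continuous.
have h := continuousD h0 h1.
exact: h.
Qed.

Lemma line_closed D x d : closed D -> closed [set t : R | D (x + t *: d)].
Proof. by move=> cD; exact: ((continuous_closedP (fun t : R => x + t *: d)).1 (cont_affine (x:=x) (d:=d)) D cD). Qed.

Lemma rec_closed D : closed D -> closed (rec_cone D).
Proof.
move=> clD; apply/closure_id; apply/seteqP; split; first exact: subset_closure.
move=> d cd x t Dx t0.
have cl : closed [set e : M | D (x + t *: e)].
  exact: ((continuous_closedP (fun e : M => x + t *: e)).1 (cont_affine2 (x:=x) (t:=t)) D clD).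
have sub : rec_cone D `<=` [set e : M | D (x + t *: e)] by move=> e re; exact: re.
have := closureS sub cd.
by rewrite -(proj1 (closure_id _) cl).
Qed.

Lemma ray_rec D x d : closed D -> is_convex D -> D x ->
  (forall t, 0 <= t -> D (x + t *: d)) -> rec_cone D d.
Proof.
move=> clD cD Dx ray z s Dz s0.
pose u := fun k : nat => z + s *: d + harmonic k *: (x - z).
have Du : forall k, D (u k).
  move=> k; have h0 : 0 < harmonic k :> R by exact: harmonic_gt0.
  have h1 : harmonic k <= 1 :> R.
    by rewrite /harmonic /= invf_le1 // ler1n.
  have := cD _ _ (harmonic k) Dz (ray (s / harmonic k) _).
  have -> : (1 - harmonic k) *: z + harmonic k *: (x + s / harmonic k *: d) = u k.
    rewrite /u; apply/matrixP => i j; rewrite !mxE; field.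
    by rewrite gt_eqF.
  apply; first by rewrite divr_ge0 // ltW.
  by apply/andP; split; [exact: ltW|exact: h1].
have cu : u @ \oo --> z + s *: d.
  have := cvgD (cvg_cst (z + s *: d)) (cvgZr_tmp (a := x - z) (@cvg_harmonic R)).
  move=> h; rewrite scale0r addr0 in h; apply: h; exact: eventually_filter.
by apply: (closed_cvg D clD _ _ cu); apply: nearW.
Qed.

Lemma sup_exit D x d t0 : closed D -> is_convex D -> D x -> 0 < t0 ->
  ~ D (x + t0 *: d) ->
  exists t, 0 <= t /\ D (x + t *: d) /\ forall e, 0 < e -> ~ D (x + (t + e) *: d).
Proof.
move=> clD cD Dx t00 nD.
pose T := [set t : R | 0 <= t] `&` [set t : R | D (x + t *: d)].
have clT : closed T by apply: closedI; [exact: closed_ge|exact: line_closed].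
have T0 : T 0 by split => /=; [exact: lexx| rewrite scale0r addr0].
have ub : ubound T t0.
  move=> t [/= t0' Dt]; rewrite leNgt; apply/negP => tt0; apply: nD.
  apply: (@seg_in _ _ _ t) => //; first exact: lt_trans tt0.
  by rewrite (ltW t00) (ltW tt0).
have hs : has_sup T by split; [exists 0|exists t0].
have Ts : T (sup T).
  have h := @closure_sup R T (ex_intro _ 0 T0) (ex_intro _ t0 ub).
  by move: h; rewrite -(proj1 (closure_id T) clT).
exists (sup T); split; first by case: Ts.
split; first by case: Ts.
move=> e e0 De.
have : T (sup T + e) by split => //=; case: Ts => /= h _; lra.
move/(sup_upper_bound hs); lra.
Qed.

End Generic.


Section Inner.
Variables (R : realType) (n p : nat).
Local Notation M := 'M[R]_(n, p).

Lemma mxinnerD (B X Y : M) : mxinner B (X + Y) = mxinner B X + mxinner B Y.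
Proof. by rewrite /mxinner mulmxDr mxtraceD. Qed.

Lemma mxinnerZ (B X : M) c : mxinner B (c *: X) = c * mxinner B X.
Proof. by rewrite /mxinner -scalemxAr mxtraceZ. Qed.

Lemma mxinnerN (B X : M) : mxinner B (- X) = - mxinner B X.
Proof. by rewrite -scaleN1r mxinnerZ mulN1r. Qed.

Lemma mxinnerDl (Y : M) : {morph (fun X : M => mxinner X Y) : X1 X2 / X1 + X2 >-> X1 + X2}.
Proof. by move=> X1 X2 /=; rewrite /mxinner raddfD mulmxDl mxtraceD. Qed.

Lemma mxinnerZl (X Y : M) c : mxinner (c *: X) Y = c * mxinner X Y.
Proof. by rewrite /mxinner linearZ /= -scalemxAl mxtraceZ. Qed.

Lemma mxinner0l (Y : M) : mxinner 0 Y = 0.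
Proof. by rewrite /mxinner trmx0 mul0mx mxtrace0. Qed.

Lemma mxinnerE (B X : M) : mxinner B X = \sum_(i < p) \sum_(j < n) B j i * X j i.
Proof.
rewrite /mxinner /mxtrace; apply: eq_bigr => i _; rewrite mxE.
by apply: eq_bigr => j _; rewrite mxE.
Qed.

Lemma mxinner_cont (B : M) : continuous (fun X : M => mxinner B X).
Proof.
move=> X.
have -> : (fun X : M => mxinner B X) = (fun X : M => \sum_(i < p) \sum_(j < n) B j i * X j i).
  by apply/funext => Y; rewrite mxinnerE.
rewrite /continuous_at.
apply: cvg_big; first exact: add_continuous.
  exact: nbhs_filter.
move=> i _.
apply: cvg_big; first exact: add_continuous.
  exact: nbhs_filter.
move=> j _.
apply: cvgMr.
  exact: nbhs_filter.
have h := (@coord_continuous R n p j i X). exact: h.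
Qed.

Lemma closed_lb (g : M -> R) (b : \bar R) : continuous g ->
  closed [set X : M | (b <= (g X)%:E)%E].
Proof.
move=> cg; case: b => [r| |].
- have -> : [set X : M | (r%:E <= (g X)%:E)%E] = g @^-1` [set x | r <= x].
    by apply/seteqP; split => X /=; rewrite lee_fin.
  exact: ((continuous_closedP g).1 cg _ (@closed_ge _ r)).
- have -> : [set X : M | (+oo <= (g X)%:E)%E] = set0.
    by apply/seteqP; split => X //=; rewrite leye_eq.
  exact: closed0.
- have -> : [set X : M | (-oo <= (g X)%:E)%E] = setT.
    by apply/seteqP; split => X //= _; rewrite leNye.
  exact: closedT.
Qed.

Lemma closed_ub (g : M -> R) (b : \bar R) : continuous g ->
  closed [set X : M | ((g X)%:E <= b)%E].
Proof.
move=> cg; case: b => [r| |].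
- have -> : [set X : M | ((g X)%:E <= r%:E)%E] = g @^-1` [set x | x <= r].
    by apply/seteqP; split => X /=; rewrite lee_fin.
  exact: ((continuous_closedP g).1 cg _ (@closed_le _ r)).
- have -> : [set X : M | ((g X)%:E <= +oo)%E] = setT.
    by apply/seteqP; split => X //= _; rewrite leey.
  exact: closedT.
- have -> : [set X : M | ((g X)%:E <= -oo)%E] = set0.
    by apply/seteqP; split => X //=; rewrite leeNy_eq.
  exact: closed0.
Qed.

End Inner.


Section Main.
Variables (R : realType) (n p : nat).
Local Notation M := 'M[R]_(n, p).
Ltac mxr := apply/matrixP => ? ?; rewrite !mxE; ring.
Variables (Xd : set M) (m mt : nat) (A : 'I_m -> M) (bl bu : 'I_m -> \bar R).
Hypothesis noline : no_line (clconv Xd).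
Hypothesis dimA : lmi_dim A = mt.
Hypothesis facehyp : forall Fa Fb : set M,
  face (clconv Xd) Fa -> affdim_le Fa mt ->
  face (rec_cone (clconv Xd)) Fb -> affdim_le Fb mt.+1 ->
  mink_sum Fa Fb `<=` Xd.

Local Notation K := (clconv Xd).
Definition Sset : set M :=
  [set X | forall i, (bl i <= (mxinner (A i) X)%:E <= bu i)%E].
Local Notation C := (K `&` Sset).
Definition phi0 (f : M) := forall i, mxinner (A i) f = 0.

Lemma lmi_cutE D : lmi_cut D A bl bu = D `&` Sset.
Proof. by []. Qed.

Lemma K_convex : is_convex K.
Proof. exact/closure_convex/conv_hull_convex. Qed.

Lemma K_closed : closed K.
Proof. exact: closed_closure. Qed.

Lemma lb_conv (b : \bar R) x y l : (b <= x%:E)%E -> (b <= y%:E)%E -> 0 <= l <= 1 ->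
  (b <= ((1 - l) * x + l * y)%:E)%E.
Proof.
move=> + + /andP[l0 l1]; case: b => [r| |] => [hx hy|hx _|_ _]; last by rewrite leNye.
  2: by rewrite leye_eq in hx.
move: hx hy; rewrite !lee_fin => hx hy.
have : (1 - l) * r <= (1 - l) * x by apply: ler_wpM2l => //; lra.
have : l * r <= l * y by apply: ler_wpM2l.
nra.
Qed.

Lemma ub_conv (b : \bar R) x y l : (x%:E <= b)%E -> (y%:E <= b)%E -> 0 <= l <= 1 ->
  (((1 - l) * x + l * y)%:E <= b)%E.
Proof.
move=> + + /andP[l0 l1]; case: b => [r| |] => [hx hy|_ _|hx _].
  3: by rewrite leeNy_eq in hx.
  2: by rewrite leey.
move: hx hy; rewrite !lee_fin => hx hy.
have : (1 - l) * x <= (1 - l) * r by apply: ler_wpM2l => //; lra.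
have : l * y <= l * r by apply: ler_wpM2l.
nra.
Qed.

Lemma S_convex : is_convex Sset.
Proof.
move=> a b l Sa Sb l01 i.
rewrite mxinnerD !mxinnerZ.
case/andP: (Sa i) => a1 a2; case/andP: (Sb i) => b1 b2.
by rewrite lb_conv ?ub_conv.
Qed.

Lemma S_closed : closed Sset.
Proof.
have -> : Sset = \bigcap_(i in [set: 'I_m])
   ([set X : M | (bl i <= (mxinner (A i) X)%:E)%E] `&`
    [set X : M | ((mxinner (A i) X)%:E <= bu i)%E]).
  apply/seteqP; split => X.
    by move=> SX i _; case/andP: (SX i).
  by move=> h i; have [] := h i I => /= -> ->.
apply: closed_bigI => i _; apply: closedI.
  exact: closed_lb (@mxinner_cont _ _ _ (A i)).
exact: closed_ub (@mxinner_cont _ _ _ (A i)).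
Qed.

Lemma C_convex : is_convex C.
Proof.
move=> a b l [Ka Sa] [Kb Sb] l01; split; first exact: K_convex.
exact: S_convex.
Qed.

Lemma C_closed : closed C.
Proof. exact: closedI K_closed S_closed. Qed.

Lemma S_shift X f : phi0 f -> Sset X -> Sset (X + f).
Proof. by move=> f0 SX i; rewrite mxinnerD f0 addr0; exact: SX. Qed.

Lemma phi0Z c f : phi0 f -> phi0 (c *: f).
Proof. by move=> f0 i; rewrite mxinnerZ f0 mulr0. Qed.

Lemma phi0N f : phi0 f -> phi0 (- f).
Proof. by move=> f0 i; rewrite mxinnerN f0 oppr0. Qed.

Lemma pointed x d : C x -> rec_cone C d -> rec_cone C (- d) -> d = 0.
Proof.
move=> Cx rd rnd; apply/eqP; apply: contrapT => dn0; apply: noline.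
exists x, d; split; first by apply/negP.
move=> t; case: (leP 0 t) => t0.
  by case: (rd x t Cx t0).
have := rnd x (- t) Cx; rewrite scaleNr scalerN opprK => h.
have /h [] : 0 <= - t by lra.
by [].
Qed.

Lemma recCK x d : C x -> rec_cone C d -> rec_cone K d.
Proof.
move=> [Kx Sx] rd; apply: (ray_rec K_closed K_convex Kx) => t t0.
by case: (rd x t (conj Kx Sx) t0).
Qed.

Lemma dirsKC e f : C e -> dirs K e f -> phi0 f -> dirs C e f.
Proof.
move=> [Ke Se] [eps [e0 [h1 h2]]] f0; exists eps; split => //; split; split => //.
  exact: S_shift (phi0Z _ f0) Se.
exact: S_shift (phi0N (phi0Z _ f0)) Se.
Qed.

Lemma rec_shift r g : rec_cone C r -> rec_cone K (r + g) -> phi0 g ->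
  rec_cone C (r + g).
Proof.
move=> rC rK g0 z t [Kz Sz] t0; split; first exact: rK.
rewrite scalerDr addrA; apply: S_shift; first exact: phi0Z.
by case: (rC z t (conj Kz Sz) t0).
Qed.

Lemma dirs_rec r f : rec_cone C r -> dirs (rec_cone K) r f -> phi0 f ->
  dirs (rec_cone C) r f.
Proof.
move=> rC [eps [e0 [h1 h2]]] f0; exists eps; split => //; split.
  exact: rec_shift (phi0Z _ f0).
exact: rec_shift (phi0N (phi0Z _ f0)).
Qed.


Lemma dim_bound (U W : {vspace M}) :
  (forall f, f \in U -> phi0 f -> f \in W) -> (\dim U <= mt + \dim W)%N.
Proof.
move=> H.
pose V := (<<[seq A i | i <- enum 'I_m]>>)%VS.
pose k := \dim V.
pose B := vbasis V.
pose g (Y : M) : 'rV[R]_k := \row_(j < k) mxinner (B`_j) Y.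
have lin_g : linear g.
  by move=> a u v; apply/rowP => j; rewrite !mxE mxinnerD mxinnerZ.
pose gM := GRing.isLinear.Build _ _ _ _ g lin_g.
pose gL : {linear M -> 'rV[R]_k} := HB.pack g gM.
pose h := linfun gL.
have hE : forall Y, h Y = g Y by move=> Y; rewrite lfunE.
have kdim := limg_ker_dim h U.
have d1 : (\dim (h @: U) <= k)%N.
  apply: leq_trans (dimvS (subvf _)) _; rewrite dimvf (@dim_matrix R 1 k); lia.
have d2 : (\dim (U :&: lker h) <= \dim W)%N.
  apply: dimvS; apply/subvP => f /memv_capP [fU fk]; apply: H => //.
  move: fk; rewrite memv_ker hE => /eqP gf0 i.
  have Ai : A i \in V.
    by apply: memv_span; apply/mapP; exists i => //; rewrite mem_enum.
  rewrite (coord_vbasis Ai) (big_morph (fun X => mxinner X f) (mxinnerDl f) (mxinner0l f)).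
  apply: big1 => j _; rewrite mxinnerZl.
  have : g f 0 j = 0 by rewrite gf0 mxE.
  by rewrite mxE => ->; rewrite mulr0.
have kmt : k = mt by rewrite /k /V -dimA.
by rewrite -kdim; apply: leq_trans (leq_add d2 d1) _; rewrite kmt addnC.
Qed.


Definition ext (e : M) := C e /\ forall f, dirs C e f -> f = 0.
Definition extdir (r : M) := rec_cone C r /\
  forall f, dirs (rec_cone C) r f -> f \in <[r]>%VS.
Definition Gset : set M :=
  [set z | exists e r s, ext e /\ extdir r /\ 0 <= s /\ z = e + s *: r].

Lemma rep_dirs D x : is_convex D -> D x ->
  exists U : {vspace M}, forall v, v \in U <-> dirs D x v.
Proof.
move=> cD Dx; apply: subspace_rep; first exact: dirs0.
  by move=> f g hf hg; exact: dirsD.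
by move=> c f hf; exact: dirsZ.
Qed.

Lemma G_sub : Gset `<=` Xd `&` Sset.
Proof.
move=> z [e [r [s [[Ce exte] [[rC extr] [s0 ->]]]]]].
have [Ke Se] := Ce.
have rK : rec_cone K r by apply: recCK Ce rC.
have cRK : is_convex (rec_cone K) by apply: rec_convex K_convex.
split; last first.
  by case: (rC e s Ce s0).
apply: (facehyp (Fa := minface K e) (Fb := minface (rec_cone K) r)).
- exact: minface_face K_convex Ke.
- right; have [U hU] := rep_dirs K_convex Ke.
  exists U; split.
    have := @dim_bound U 0%VS _; rewrite dimv0 addn0; apply.
    move=> f /hU fU f0; rewrite memv0; apply/eqP; apply: exte.
    exact: dirsKC.
  move=> y1 y2 F1 F2.
  have -> : y1 - y2 = (y1 - e) - (y2 - e) by mxr.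
  apply: memvB; apply/hU; exact: minface_dirs K_convex Ke _.
- exact: minface_face cRK rK.
- right; have [U hU] := rep_dirs cRK rK.
  exists U; split.
    apply: leq_trans (@dim_bound U <[r]>%VS _) _.
      move=> f /hU fU f0; apply: extr; exact: dirs_rec.
    rewrite dim_vline; case: (r != 0) => /=; lia.
  move=> y1 y2 F1 F2.
  have -> : y1 - y2 = (y1 - r) - (y2 - r) by mxr.
  apply: memvB; apply/hU; exact: minface_dirs cRK rK _.
- exists e, (s *: r); split; first exact: minface_self.
  split => //; split; first exact: rec_scale.
  exists (1 + s)^-1; split; first by rewrite invr_gt0; lra.
  have -> : r + (1 + s)^-1 *: (r - s *: r) = (2 / (1 + s)) *: r.
    apply/matrixP => i j; rewrite !mxE; field; lra.
  apply: rec_scale => //; rewrite divr_ge0 //; lra.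
Qed.


Lemma exit x d (U : {vspace M}) : C x -> (forall v, v \in U <-> dirs C x v) ->
  dirs C x d -> ~ rec_cone C d ->
  exists t, 0 < t /\ C (x + t *: d) /\ forall U' : {vspace M},
    (forall v, v \in U' <-> dirs C (x + t *: d) v) -> (\dim U' < \dim U)%N.
Proof.
move=> Cx hU [eps [e0 [Cp Cm]]] nr.
have [t0 [t00 nC]] : exists t0, 0 < t0 /\ ~ C (x + t0 *: d).
  apply: contrapT => h; apply: nr; apply: (ray_rec C_closed C_convex Cx) => t t0.
  case: (ltrP 0 t) => tp.
    by apply: contrapT => nCt; apply: h; exists t; split.
  have -> : t = 0 by lra.
  by rewrite scale0r addr0.
have [ts [ts0 [Cy nb]]] := sup_exit C_closed C_convex Cx t00 nC.
have tspos : eps <= ts.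
  rewrite leNgt; apply/negP => lt; apply: (nb (eps - ts)); first lra.
  by have -> : ts + (eps - ts) = eps by ring.
have tsp : 0 < ts by lra.
exists ts; split => //; split => //.
move=> U' hU'.
pose lam := ts / (ts + eps).
have lam01 : 0 <= lam <= 1.
  apply/andP; split; first by rewrite divr_ge0 //; lra.
  by rewrite ler_pdivrMr ?mul1r; lra.
have lam1 : 0 < 1 - lam.
  have -> : 1 - lam = eps / (ts + eps) by rewrite /lam; field; lra.
  by rewrite divr_gt0 //; lra.
have sub : (U' <= U)%VS.
  apply/subvP => f /hU' [dl [dl0 [h1 h2]]]; apply/hU.
  exists ((1 - lam) * dl); split; first exact: mulr_gt0.
  split.
    have := C_convex h1 Cm lam01.
    have -> : (1 - lam) *: (x + ts *: d + dl *: f) + lam *: (x - eps *: d) =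
        x + (1 - lam) * dl *: f.
      rewrite /lam; apply/matrixP => i j; rewrite !mxE; field; lra.
    by [].
  have := C_convex h2 Cm lam01.
  have -> : (1 - lam) *: (x + ts *: d - dl *: f) + lam *: (x - eps *: d) =
      x - (1 - lam) * dl *: f.
    rewrite /lam; apply/matrixP => i j; rewrite !mxE; field; lra.
  by [].
have dU : d \in U by apply/hU; exists eps.
have dU' : d \notin U'.
  apply/negP => /hU' [dl [dl0 [h1 _]]]; apply: (nb dl dl0).
  by have -> : x + (ts + dl) *: d = x + ts *: d + dl *: d by mxr.
have nsub : ~~ (U <= U')%VS.
  by apply/negP => /subvP h; move/negP: dU'; apply; apply: h.
by rewrite (ltn_leqif (dimv_leqif_sup sub)).
Qed.


Lemma no2d x (U : {vspace M}) : C x -> (forall v, v \in U <-> dirs C x v) ->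
  (2 <= \dim U)%N ->
  (forall d, dirs C x d -> rec_cone C d \/ rec_cone C (- d)) -> False.
Proof.
move=> Cx hU dU hd.
have rcc : closed (rec_cone C) := rec_closed C_closed.
have rcv : is_convex (rec_cone C) := rec_convex C_convex.
have pt : forall w, rec_cone C w -> rec_cone C (- w) -> w = 0 := fun w => pointed Cx.
have U0 : U != 0%VS.
  by rewrite -dimv_eq0; apply/eqP => h; rewrite h in dU.
pose u := vpick U.
have uU : u \in U := memv_pick U.
have u0 : u != 0 by rewrite vpick0.
have [v vU vnu] : exists2 v, v \in U & v \notin <[u]>%VS.
  apply/subvPn; apply/negP => sub; have := dimvS sub; rewrite dim_vline u0 => h.
  lia.
have indep : forall a b, a != 0 -> a *: u + b *: v != 0.
  move=> a b a0; apply/negP => /eqP h.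
  have [b0|b0] := eqVneq b 0.
    move: h; rewrite b0 scale0r addr0 => /eqP; rewrite scaler_eq0 (negbTE a0).
    by rewrite (negbTE u0).
  move/negP: vnu; apply.
  have -> : v = (- a / b) *: u.
    have hv : b *: v = - (a *: u) by apply/eqP; rewrite -subr_eq0 opprK addrC h.
    apply: (scalerI b0); rewrite hv scalerA mulrC divfK // scaleNr.
    done.
  by apply: memvZ; exact: memv_line.
have core : forall u' v', u' \in U -> v' \in U -> rec_cone C u' ->
    ~ (forall t, 0 <= t -> rec_cone C (u' + t *: v')) ->
    (forall s, u' + s *: v' != 0) -> False.
  move=> u' v' u'U v'U ru' nray ind.
  have [t0 [t00 nr]] : exists t0, 0 < t0 /\ ~ rec_cone C (u' + t0 *: v').
    apply: contrapT => h; apply: nray => t t0.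
    case: (ltrP 0 t) => tp.
      by apply: contrapT => nCt; apply: h; exists t; split.
    have -> : t = 0 by lra.
    by rewrite scale0r addr0.
  have [ts [ts0 [rw nb]]] := sup_exit rcc rcv ru' t00 nr.
  have neg : forall e, 0 < e -> rec_cone C (- u' + (ts + e) *: (- v')).
    move=> e e0.
    have inU : u' + (ts + e) *: v' \in U by apply: memvD => //; exact: memvZ.
    have [h|h] := hd _ (proj1 (hU _) inU).
      by exfalso; exact: (nb e e0).
    by have -> : - u' + (ts + e) *: - v' = - (u' + (ts + e) *: v') by mxr.
  have Zcl := line_closed (x := - u') (d := - v') rcc.
  have cvs : (fun k : nat => ts + harmonic k) @ \oo --> ts.
    have := cvgD (cvg_cst ts) (@cvg_harmonic R); rewrite addr0 => h.
    by apply: h; exact: eventually_filter.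
  have Zts : rec_cone C (- u' + ts *: - v').
    apply: (closed_cvg [set t : R | rec_cone C (- u' + t *: - v')] Zcl _ _ cvs).
    by apply: nearW => k /=; apply: neg; exact: harmonic_gt0.
  have : u' + ts *: v' = 0.
    apply: pt => //.
    by have -> : - (u' + ts *: v') = - u' + ts *: - v' by mxr.
  by move/eqP; rewrite (negbTE (ind ts)).
have [uu|uu] := hd u (proj1 (hU u) uU).
  have ind : forall b, u + b *: v = 1 *: u + b *: v by move=> b; rewrite scale1r.
  case: (pselect (forall t, 0 <= t -> rec_cone C (u + t *: v))) => h1; last first.
    by apply: (core u v) => // s; rewrite ind indep // oner_eq0.
  case: (pselect (forall t, 0 <= t -> rec_cone C (u + t *: - v))) => h2; last first.
    apply: (core u (- v)) => //; first by rewrite memvN.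
    by move=> s; rewrite scalerN -scaleNr ind indep // oner_eq0.
  have r1 := ray_rec rcc rcv uu h1.
  have r2 := ray_rec rcc rcv uu h2.
  have rv : rec_cone C v by have := r1 0 1 (rec0 (D := C)) ler01; rewrite scale1r add0r.
  have rnv : rec_cone C (- v) by have := r2 0 1 (rec0 (D := C)) ler01; rewrite scale1r add0r.
  have v00 := pt _ rv rnv.
  by move/negP: vnu; apply; rewrite v00 mem0v.
have ind : forall b, - u + b *: v = (-1) *: u + b *: v by move=> b; rewrite scaleN1r.
have m1 : (-1 : R) != 0 by rewrite oppr_eq0 oner_eq0.
have nuU : - u \in U by rewrite memvN.
case: (pselect (forall t, 0 <= t -> rec_cone C (- u + t *: v))) => h1; last first.
  by apply: (core (- u) v) => // s; rewrite ind indep.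
case: (pselect (forall t, 0 <= t -> rec_cone C (- u + t *: - v))) => h2; last first.
  apply: (core (- u) (- v)) => //; first by rewrite memvN.
  by move=> s; rewrite scalerN -scaleNr ind indep.
have r1 := ray_rec rcc rcv uu h1.
have r2 := ray_rec rcc rcv uu h2.
have rv : rec_cone C v by have := r1 0 1 (rec0 (D := C)) ler01; rewrite scale1r add0r.
have rnv : rec_cone C (- v) by have := r2 0 1 (rec0 (D := C)) ler01; rewrite scale1r add0r.
have v00 := pt _ rv rnv.
by move/negP: vnu; apply; rewrite v00 mem0v.
Qed.


Lemma conv_G N : forall x (U : {vspace M}), C x ->
  (forall v, v \in U <-> dirs C x v) -> (\dim U <= N)%N -> conv_hull Gset x.
Proof.
elim: N => [|N IH] x U Cx hU dU.
  have U0 : U = 0%VS by apply/eqP; rewrite -dimv_eq0; lia.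
  apply: conv_hull_self; exists x, 0, 0; split.
    by split => // f /hU; rewrite U0 memv0 => /eqP.
  split.
    split; first exact: rec0.
    move=> f [eps [e0 [h1 h2]]].
    rewrite add0r in h1; rewrite sub0r in h2.
    have := pointed Cx h1 h2; move/eqP; rewrite scaler_eq0 (gt_eqF e0) /= => /eqP ->.
    exact: mem0v.
  by split; [exact: lexx| rewrite scaler0 addr0].
case: (leqP (\dim U) N) => dUN; first exact: IH dUN.
have dUe : \dim U = N.+1 by lia.
case: (pselect (exists d, dirs C x d /\ ~ rec_cone C d /\ ~ rec_cone C (- d))).
  move=> [d [dd [nd nnd]]].
  have [t1 [t1p [C1 h1]]] := exit Cx hU dd nd.
  have [t2 [t2p [C2 h2]]] := exit Cx hU (dirsN dd) nnd.
  have [U1 hU1] := rep_dirs C_convex C1.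
  have [U2 hU2] := rep_dirs C_convex C2.
  have g1 : conv_hull Gset (x + t1 *: d).
    by apply: (IH _ U1 C1 hU1); have := h1 U1 hU1; rewrite dUe.
  have g2 : conv_hull Gset (x + t2 *: - d).
    by apply: (IH _ U2 C2 hU2); have := h2 U2 hU2; rewrite dUe.
  have l01 : 0 <= t1 / (t1 + t2) <= 1.
    apply/andP; split; first by rewrite divr_ge0 //; lra.
    by rewrite ler_pdivrMr ?mul1r; lra.
  have := conv_hull_convex g1 g2 l01.
  have -> : (1 - t1 / (t1 + t2)) *: (x + t1 *: d) + t1 / (t1 + t2) *: (x + t2 *: - d) = x.
    apply/matrixP => i j; rewrite !mxE; field.
    by rewrite gt_eqF // addr_gt0.
  by [].
move=> nod.
have hd : forall d, dirs C x d -> rec_cone C d \/ rec_cone C (- d).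
  move=> d dd; case: (pselect (rec_cone C d)) => [h|h]; first by left.
  right; apply: contrapT => h'; apply: nod; exists d; split => //.
case: (leqP 2 (\dim U)) => d2.
  by exfalso; exact: (no2d Cx hU d2 hd).
have N0 : N = 0%N by lia.
have U0 : U != 0%VS by rewrite -dimv_eq0 dUe.
pose u := vpick U.
have uU : u \in U := memv_pick U.
have u0 : u != 0 by rewrite vpick0.
have [w [wU [rw w0]]] : exists w, w \in U /\ rec_cone C w /\ w != 0.
  case: (hd u (proj1 (hU u) uU)) => h; first by exists u.
  by exists (- u); rewrite memvN oppr_eq0.
have nrw : ~ rec_cone C (- w).
  by move=> h; move/eqP: w0; apply; exact: pointed Cx rw h.
have nwU : - w \in U by rewrite memvN.
have [t [tp [Cy hy]]] := exit Cx hU (proj1 (hU _) nwU) nrw.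
have exty : ext (x + t *: - w).
  split => // f fd.
  have [Uy hUy] := rep_dirs C_convex Cy.
  have := hy Uy hUy; rewrite dUe N0 ltnS leqn0 dimv_eq0 => /eqP Uy0.
  by move: (proj2 (hUy f) fd); rewrite Uy0 memv0 => /eqP.
have Uw : U = <[w]>%VS.
  apply/eqP; rewrite eq_sym eqEdim -memvE wU /= dim_vline w0 dUe N0.
  done.
have extw : extdir w.
  split => // f [eps [e0 [h1 h2]]].
  rewrite -Uw; apply/hU; exists (t * eps); split; first exact: mulr_gt0.
  split.
    have := h1 _ t Cy (ltW tp).
    by have -> : x + t *: - w + t *: (w + eps *: f) = x + t * eps *: f by mxr.
  have := h2 _ t Cy (ltW tp).
  by have -> : x + t *: - w + t *: (w - eps *: f) = x - t * eps *: f by mxr.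
apply: conv_hull_self; exists (x + t *: - w), w, t; split => //; split => //.
by split; [exact: ltW| mxr].
Qed.

Theorem main_thm : lmi_cut K A bl bu = clconv (lmi_cut Xd A bl bu).
Proof.
rewrite !lmi_cutE; apply/seteqP; split.
  move=> x Cx; have [U hU] := rep_dirs C_convex Cx.
  have g := conv_G Cx hU (leqnn (\dim U)).
  by apply: subset_closure; exact: conv_hullS G_sub _ g.
have sub : Xd `&` Sset `<=` C.
  move=> z [Xz Sz]; split => //; apply: subset_closure; exact: conv_hull_self.
have h : conv_hull (Xd `&` Sset) `<=` C := conv_hull_sub C_convex sub.
move=> z cz; have := closureS h cz.
by rewrite -(proj1 (closure_id _) C_closed).
Qed.

End Main.

Theorem theorem3 (R : realType) (q : Qkind) (k n p t : nat)
    (F : 'I_t -> 'M[R]_(n, p) -> R) (mt m : nat) :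
  (0 < k)%N -> (k <= n)%N -> (n <= p)%N ->
  (forall j, {within Qset (R:=R) (n:=n) (p:=p) q, continuous F j}) ->
  domain_set q k F !=set0 ->
  closed (domain_set q k F) ->
  no_line (clconv (domain_set q k F)) ->
  (mt <= m)%N ->
  (forall Fa Fb : set 'M[R]_(n, p),
      face (clconv (domain_set q k F)) Fa -> affdim_le Fa mt ->
      face (rec_cone (clconv (domain_set q k F))) Fb -> affdim_le Fb mt.+1 ->
      mink_sum Fa Fb `<=` domain_set q k F) ->
  forall (A : 'I_m -> 'M[R]_(n, p)) (bl bu : 'I_m -> \bar R),
    (forall i, (bl i <= bu i)%E) ->
    lmi_dim A = mt ->
    lmi_cut (clconv (domain_set q k F)) A bl bu =
    clconv (lmi_cut (domain_set q k F) A bl bu).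
Proof.
move=> _ _ _ _ _ _ nl _ fh A bl bu _ dA.

exact: (main_thm bl bu nl dA fh).
Qed.
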